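(* Let $(M,\rho)$ be a metric space, $f:[a,b]\to M$ arbitrary, and let $E\subset[a,b]$ be a Lebesgue measurable set such that $md(f,x)$ exists and is finite for every $x\in E$ (and $x\mapsto md(f,x)$ is measurable on $E$). Then $$\mathcal H^1(f(E))\le\int_E md(f,x)\,dx.$$
   Context: For $f:[a,b]\to(M,\rho)$ and $x\in[a,b]$, $md(f,x)=\lim_{t\to0,\ x+t\in[a,b]}\rho(f(x+t),f(x))/|t|$ when the limit exists. $\mathcal H^1$ is the one-dimensional Hausdorff measure on $M$. The integral of the nonnegative function may be $+\infty$. *)

(* Defs.v *)
From HB Require Import structures.
From mathcomp Require Import all_boot all_order all_algebra.
From mathcomp Require Import all_classical all_reals all_analysis.
Set Implicit Arguments.
Unset Strict Implicit.
Unset Printing Implicit Defensive.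
Import Order.TTheory GRing.Theory Num.Theory.
Import numFieldNormedType.Exports.
Local Open Scope classical_set_scope.
Local Open Scope ring_scope.

Definition is_metric (R : realType) (M : Type) (rho : M -> M -> R) : Prop :=
  (forall x y, 0 <= rho x y) /\
  (forall x y, rho x y = 0 <-> x = y) /\
  (forall x y, rho x y = rho y x) /\
  (forall x y z, rho x z <= rho x y + rho y z).

(* Diameter of a set (0 for the empty set), possibly +oo. *)
Definition diam (R : realType) (M : Type) (rho : M -> M -> R) (C : set M)
  : \bar R :=
  ereal_sup ([set 0%E] `|` [set (rho x y)%:E | x in C & y in C]).

Definition hausdorff1_delta (R : realType) (M : Type) (rho : M -> M -> R)
  (delta : R) (A : set M) : \bar R :=
  ereal_inf [set (\sum_(0 <= i <oo) diam rho (C i))%E | C in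
    [set C : nat -> set M | A `<=` \bigcup_i C i /\
                            forall i, (diam rho (C i) <= delta%:E)%E]].

(* One-dimensional Hausdorff measure H^1 = lim_{delta -> 0+} H^1_delta
   = sup_{delta > 0} H^1_delta (the approximations are nonincreasing in delta). *)
Definition hausdorff1 (R : realType) (M : Type) (rho : M -> M -> R)
  (A : set M) : \bar R :=
  ereal_sup [set hausdorff1_delta rho delta A | delta in [set d : R | 0 < d]].

Definition has_metric_derivative (R : realType) (M : Type)
  (rho : M -> M -> R) (f : R -> M) (a b x L : R) : Prop :=
  forall eps : R, 0 < eps -> exists2 delta : R, 0 < delta &
    forall t : R, t != 0 -> a <= x + t <= b -> `|t| < delta ->
      `| rho (f (x + t)) (f x) / `|t| - L | < eps.

(* The sigma-algebra of Lebesgue measurable subsets of R (the completion),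
   carrying [completed_lebesgue_measure]. *)
Notation lebType R := (caratheodory_type (R:=R) (wlength (@idfun R))^*%mu).

(* Main.v *)
Require Import Defs.
From HB Require Import structures.
From mathcomp Require Import all_boot all_order all_algebra.
From mathcomp Require Import all_classical all_reals all_analysis.
From mathcomp Require Import measurable_realfun.
From mathcomp Require Import lra.
Import Order.TTheory GRing.Theory Num.Theory.
Import numFieldNormedType.Exports.
Local Open Scope classical_set_scope.
Local Open Scope ring_scope.
Local Open Scope ereal_scope.

Lemma diam_ge0 (R : realType) (M : Type) (rho : M -> M -> R) (C : set M) :
  0 <= diam rho C.
Proof. by apply: ereal_sup_ubound; left. Qed.

Lemma diam_le (R : realType) (M : Type) (rho : M -> M -> R) (C : set M) (c : R) :
  (0 <= c)%R -> (forall x y, C x -> C y -> (rho x y <= c)%R) -> diam rho C <= c%:E.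
Proof.
move=> c0 H; apply: ge_ereal_sup => _ [->|[x Cx [y Cy <-]]].
  by rewrite lee_fin.
by rewrite lee_fin; exact: H.
Qed.

Lemma diam_set0 (R : realType) (M : Type) (rho : M -> M -> R) :
  diam rho set0 = 0.
Proof.
apply/eqP; rewrite eq_le diam_ge0 andbT.
by apply: (@diam_le _ _ _ _ 0%R) => //.
Qed.

Lemma diam_ballish (R : realType) (M : Type) (rho : M -> M -> R)
  (hrho : is_metric rho) (C : set M) (z : M) (c : R) :
  (0 <= c)%R -> (forall x, C x -> (rho x z <= c)%R) -> diam rho C <= (c *+ 2)%:E.
Proof.
move=> c0 H; apply: diam_le; first by rewrite mulrn_wge0.
move=> x y Cx Cy; case: hrho => _ [_ [hs ht]].
apply: (le_trans (ht x z y)); rewrite mulr2n lerD//; first exact: H.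
by rewrite hs; exact: H.
Qed.

Lemma H_cover (R : realType) (M : Type) (rho : M -> M -> R) (d : R)
  (S : set M) (C : nat -> set M) :
  S `<=` \bigcup_i C i -> (forall i, diam rho (C i) <= d%:E) ->
  hausdorff1_delta rho d S <= \sum_(0 <= i <oo) diam rho (C i).
Proof. by move=> SC Cd; apply: ereal_inf_lbound; exists C. Qed.

Lemma H_ge0 (R : realType) (M : Type) (rho : M -> M -> R) (d : R) (S : set M) :
  0 <= hausdorff1_delta rho d S.
Proof.
apply: le_ereal_inf_tmp => _ [C _ <-]; apply: nneseries_ge0 => *; exact: diam_ge0.
Qed.

Lemma H_mono (R : realType) (M : Type) (rho : M -> M -> R) (d : R) (S T : set M) :
  S `<=` T -> hausdorff1_delta rho d S <= hausdorff1_delta rho d T.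
Proof.
move=> ST; apply: ereal_inf_le_tmp => _ [C [TC Cd] <-]; exists C => //.
by split => //; exact: subset_trans TC.
Qed.

Lemma H_single (R : realType) (M : Type) (rho : M -> M -> R) (d : R) (C : set M) :
  (0 <= d)%R -> diam rho C <= d%:E -> hausdorff1_delta rho d C <= diam rho C.
Proof.
move=> d0 Cd.
pose C' := fun i : nat => if i is 0%N then C else set0.
have := @H_cover _ _ rho d C C'.
rewrite nneseries_recl//; last by move=> *; exact: diam_ge0.
rewrite eseries0; last by move=> [|k] //= _ _; rewrite diam_set0.
rewrite adde0; apply.
  by move=> x Cx; exists 0%N.
by move=> [|i] //=; rewrite diam_set0 lee_fin.
Qed.
Lemma H_sub (R : realType) (M : Type) (rho : M -> M -> R) (d : R)
  (S : nat -> set M) :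
  hausdorff1_delta rho d (\bigcup_k S k) <=
  \sum_(0 <= k <oo) hausdorff1_delta rho d (S k).
Proof.
set T := \sum_(0 <= k <oo) _.
have T0 : 0 <= T by apply: nneseries_ge0 => *; exact: H_ge0.
have [->|Tfin] := eqVneq T +oo; first by rewrite leey.
have Sfin k : hausdorff1_delta rho d (S k) \is a fin_num.
  rewrite ge0_fin_numE ?H_ge0//; apply: (le_lt_trans _ (_ : T < +oo)).
    have := @nneseries_lim_ge _ (fun k => hausdorff1_delta rho d (S k)) xpredT 0%N k.+1.
    move=> /(_ (fun n _ _ => H_ge0 _ _ _ _ _)); apply: le_trans.
    by rewrite big_nat_recr//= leeDr// sume_ge0// => *; exact: H_ge0.
  by rewrite ltey.
apply/lee_addgt0Pr => e e0.
have hC : forall k, exists C : nat -> set M,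
    [/\ S k `<=` \bigcup_i C i, (forall i, diam rho (C i) <= d%:E) &
     \sum_(0 <= i <oo) diam rho (C i) <=
       hausdorff1_delta rho d (S k) + (e / (2 ^ k.+1)%:R)%:E].
  move=> k.
  have e2 : (0 < e / (2 ^ k.+1)%:R)%R by rewrite divr_gt0// ltr0n expn_gt0.
  have [_ [C [SC Cd] <-] lt] := lb_ereal_inf_adherent e2 (Sfin k).
  by exists C; split => //; exact: ltW.
have /choice [C hCk] := hC.
have /ppcard_eqP[f] : ([set: nat] #= [set: nat * nat])%card.
  by rewrite card_eq_sym; exact: card_nat2.
pose C' := fun n => C (f n).1 (f n).2.
apply: (le_trans (@H_cover _ _ rho d _ C' _ _)).
- move=> x [k _ Skx]; have [SC _ _] := hCk k.
  have [i _ Cx] := SC _ Skx.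
  have [n _ fn] := (@surj _ _ _ _ f) (k, i) I.
  by exists n => //; rewrite /C' fn.
- by move=> n; have [_ Cd _] := hCk (f n).1; exact: Cd.
rewrite nneseries_esumT; last by move=> *; exact: diam_ge0.
rewrite (_ : \esum_(i in [set: nat]) diam rho (C' i) =
   \esum_(p in [set: nat * nat]) diam rho (C p.1 p.2)); last first.
  by rewrite (reindex_esum [set: nat] _ f).
rewrite (_ : [set: nat * nat] = [set: nat] `*`` (fun=> [set: nat])); last first.
  by apply/seteqP; split.
rewrite -(@esum_esum _ _ _ [set: nat] (fun=> [set: nat]) (fun i j => diam rho (C i j))); last first.
  by move=> *; exact: diam_ge0.
rewrite -nneseries_esumT; last by move=> n; apply: esum_ge0 => *; exact: diam_ge0.
apply: le_trans; last first.
  apply: (@epsilon_trick _ (fun k => hausdorff1_delta rho d (S k)) e xpredT).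
    by move=> *; exact: H_ge0.
  exact: ltW.
apply: lee_nneseries => [n _ _|n _].
  by apply: esum_ge0 => *; exact: diam_ge0.
rewrite -nneseries_esumT; last by move=> *; exact: diam_ge0.
by have [_ _ ->] := hCk n.
Qed.
Lemma H_piece (R : realType) (M : Type) (rho : M -> M -> R) (a b : R)
  (f : R -> M) (A : set R) (c h d : R) :
  (0 < d)%R -> (0 <= c)%R -> (0 < h)%R -> A `<=` `[a, b] ->
  ((wlength (@idfun R))^* A)%mu = 0 ->
  (forall x y, A x -> (a <= y <= b)%R -> (`|y - x| < h)%R ->
     (rho (f y) (f x) <= c * `|y - x|)%R) ->
  hausdorff1_delta rho d (f @` A) <= 0.
Proof.
move=> d0 c0 h0 Aab A0 Hl.
apply/lee_addgt0Pr => e e0; rewrite add0e.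
pose e' := Num.min (h / 2)%R (Num.min (d / (c + 1))%R (e / (c + 1))%R).
have c1 : (0 < c + 1)%R by rewrite ltr_wpDl.
have e'0 : (0 < e')%R by rewrite !lt_min !divr_gt0.
have : ((wlength (@idfun R))^* A)%mu \is a fin_num by rewrite A0.
rewrite outer_measure_open_itv_cover => Afin.
have [_ [F [Fitv AF] <-] Flt] := lb_ereal_inf_adherent e'0 Afin.
move: Flt; rewrite -outer_measure_open_itv_cover A0 add0e => Flt.
have Fk k : wlength (@idfun R) (F k) <= e'%:E.
  apply: le_trans (ltW Flt).
  have := @nneseries_lim_ge _ (fun k => wlength (@idfun R) (F k)) xpredT 0%N k.+1.
  move=> /(_ (fun n _ _ => wlength_ge0 _ _)); apply: le_trans.
  by rewrite big_nat_recr//= leeDr// sume_ge0// => *; exact: wlength_ge0.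
pose C k := f @` (A `&` F k).
have Cd k : diam rho (C k) <= (c%:E * wlength (@idfun R) (F k)).
  have [[p q] /= Fkpq] := Fitv k.
  move: (Fk k); rewrite Fkpq wlength_itv /= lte_fin.
  case: ltP => pq; last first.
    move=> _; rewrite mule0.
    rewrite (_ : C k = set0) ?diam_set0//.
    apply/seteqP; split => // y [x [_ Fx] _]; move: Fx; rewrite Fkpq /= in_itv /= => /andP[px xq].
    by move: (lt_trans px xq); rewrite ltNge pq.
  rewrite -EFinD lee_fin => qpe; rewrite -EFinM.
  apply: diam_le; first by rewrite mulr_ge0// subr_ge0 ltW.
  move=> _ _ [u [Au Fu] <-] [v [Av Fv] <-].
  move: Fu Fv; rewrite Fkpq /= !in_itv /= => /andP[pu uq] /andP[pv vq].
  have uvpq : (`|u - v| < q - p)%R.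
    by rewrite ltr_norml; apply/andP; split; lra.
  have := Aab _ Au; rewrite /= in_itv /= => uab.
  apply: (le_trans (Hl v u Av uab _)).
    apply: (lt_le_trans uvpq); apply: (le_trans qpe).
    by rewrite /e' ge_min ler_pdivrMr// ler_pMr// ler1n.
  by rewrite ler_wpM2l// ltW.
apply: (le_trans (@H_cover _ _ rho d _ C _ _)).
- by move=> _ [x Ax <-]; have [k _ Fkx] := AF _ Ax; exists k => //; exists x.
- move=> k; apply: (le_trans (Cd k)).
  apply: (le_trans (lee_wpmul2l _ (Fk k))); first by rewrite lee_fin.
  rewrite -EFinM lee_fin; apply: (le_trans (ler_wpM2l c0 (_ : e' <= d / (c + 1))%R)).
    by rewrite /e' ge_min ge_min lexx orbT.
  by rewrite mulrA ler_pdivrMr//; nra.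
have : \sum_(0 <= i <oo) diam rho (C i) <=
    \sum_(0 <= i <oo) (c%:E * wlength (@idfun R) (F i)).
  by apply: lee_nneseries => [*|k _]; [exact: diam_ge0|exact: Cd].
move/le_trans; apply.
rewrite nneseriesZl; last by move=> *; exact: wlength_ge0.
apply: (le_trans (lee_wpmul2l _ (ltW Flt))); first by rewrite lee_fin.
rewrite -EFinM lee_fin; apply: (le_trans (ler_wpM2l c0 (_ : e' <= e / (c + 1))%R)).
  by rewrite /e' ge_min ge_min lexx !orbT.
by rewrite mulrA ler_pdivrMr//; nra.
Qed.
Lemma H_null (R : realType) (M : Type) (rho : M -> M -> R) (a b : R)
  (f : R -> M) (N : set R) (c d : R) :
  (0 < d)%R -> (0 <= c)%R -> N `<=` `[a, b] ->
  ((wlength (@idfun R))^* N)%mu = 0 ->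
  (forall x, N x -> exists2 r : R, (0 < r)%R & forall y, (a <= y <= b)%R ->
     (`|y - x| < r)%R -> (rho (f y) (f x) <= c * `|y - x|)%R) ->
  hausdorff1_delta rho d (f @` N) <= 0.
Proof.
move=> d0 c0 Nab N0 HN.
pose Nn n := [set x | N x /\ forall y, (a <= y <= b)%R ->
     (`|y - x| < (n.+1%:R)^-1)%R -> (rho (f y) (f x) <= c * `|y - x|)%R].
have sub : f @` N `<=` \bigcup_n f @` Nn n.
  move=> _ [x Nx <-]; have [r r0 Hr] := HN x Nx.
  exists (Num.truncn r^-1) => //; exists x => //; split => // y yab yx.
  apply: Hr => //; apply: (lt_trans yx).
  rewrite -[X in (_ < X)%R]invrK ltf_pV2 ?posrE ?invr_gt0 //.

  exact: truncnS_gt.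
apply: (le_trans (@H_mono _ _ rho d _ _ sub)); apply: (le_trans (@H_sub _ _ rho d _)).
have : \sum_(0 <= k <oo) hausdorff1_delta rho d (f @` Nn k) <=
       \sum_(0 <= k <oo) (fun=> (0 : \bar R)) k.
  apply: lee_nneseries => [*|k _]; first exact: H_ge0.
  apply: (@H_piece _ _ rho a b f (Nn k) c (k.+1%:R)^-1 d) => //.
  - by move=> x [Nx _]; exact: Nab.
  - apply/eqP; rewrite eq_le outer_measure_ge0 andbT -N0.
    by apply: le_outer_measure => x [].
  - by move=> x y [_ Hx] yab yx; exact: Hx.
by move/le_trans; apply; rewrite eseries0.
Qed.
Lemma H_set0 (R : realType) (M : Type) (rho : M -> M -> R) (d : R) :
  (0 <= d)%R -> hausdorff1_delta rho d set0 = 0.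
Proof.
move=> d0; apply/eqP; rewrite eq_le H_ge0 andbT.
apply: le_trans (@H_single _ _ rho d set0 d0 _) _; rewrite diam_set0 ?lee_fin//.
Qed.

Lemma H_U2 (R : realType) (M : Type) (rho : M -> M -> R) (d : R) (S T : set M) :
  (0 <= d)%R ->
  hausdorff1_delta rho d (S `|` T) <=
  hausdorff1_delta rho d S + hausdorff1_delta rho d T.
Proof.
move=> d0.
pose F := fun n : nat => if n is 0%N then S else if n is 1%N then T else set0.
have -> : S `|` T = \bigcup_n F n.
  apply/seteqP; split => [x [Sx|Tx]|x [[|[|n]] _ //= Fx]]; [by exists 0%N|by exists 1%N|by left|by right].
apply: le_trans (@H_sub _ _ rho d F) _.
rewrite (nneseries_split 0 2); last by move=> *; exact: H_ge0.
rewrite eseries0 ?adde0; last by move=> [|[|i]] //= _ _; exact: H_set0.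
by rewrite big_nat_recr//= big_nat_recr//= big_geq// add0e.
Qed.
Local Open Scope ring_scope.
Definition qq (n : nat) : rat * rat := odflt (0%R, 1%R) (unpickle n).
Definition ctr (R : realType) (n : nat) : R := ratr (qq n).1.
Definition rd (R : realType) (n : nat) : R :=
  if (0 < ratr (qq n).2 :> R)%R then ratr (qq n).2 else 1%R.
Definition BB (R : realType) (n : nat) : set R := ball (ctr R n) (rd R n).

Lemma rd_gt0 (R : realType) n : (0 < rd R n)%R.
Proof. by rewrite /rd; case: ifPn. Qed.

Lemma radius_BB (R : realType) n : (radius (BB R n))%:num = rd R n.
Proof. by rewrite /BB radius_ball_num// ltW// rd_gt0. Qed.

Lemma BBE (R : realType) n y : BB R n y = (`|ctr R n - y| < rd R n)%R.
Proof. by []. Qed.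

Lemma closure_BBE (R : realType) n y :
  closure (BB R n) y = (`|ctr R n - y| <= rd R n)%R.
Proof. by rewrite /BB closure_ballE closed_ballE ?rd_gt0. Qed.

Lemma good_ball (R : realType) (x e rx epsO c c' d : R) :
  (0 < e)%R -> (0 < rx)%R -> (0 < epsO)%R -> (0 <= c)%R -> (c < c')%R -> (0 < d)%R ->
  exists n, [/\ BB R n x, (rd R n < e)%R,
    (forall y, (`|ctr R n - y| <= rd R n)%R ->
       [/\ `|y - x| < rx, `|x - y| < epsO & c * `|y - x| <= c' * rd R n]%R) &
    (c' * (rd R n *+ 2) <= d)%R].
Proof.
move=> e0 rx0 eO0 c0 cc' d0.
have c'0 : (0 < c')%R by apply: le_lt_trans cc'.
pose rho := Num.min e (Num.min (rx / 2) (Num.min (epsO / 2) (d / (c' *+ 2)))).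
have rho0 : (0 < rho)%R by rewrite !lt_min e0 !divr_gt0 ?mulrn_wgt0.
have rhoe : (rho <= e)%R by rewrite ge_min lexx.
have rhorx : (rho <= rx / 2)%R by rewrite ge_min ge_min lexx orbT.
have rhoO : (rho <= epsO / 2)%R by rewrite ge_min ge_min ge_min lexx !orbT.
have rhod : (rho <= d / (c' *+ 2))%R by rewrite ge_min ge_min ge_min lexx !orbT.
have [s] := @rat_in_itvoo R (rho / 2) rho ltac:(lra).
rewrite in_itv /= => /andP[s1 s2].
pose th := Num.min (1 / 2) ((c' - c) / (c + 1)).
have th0 : 0 < th.
  by rewrite lt_min; apply/andP; split; [lra|]; apply: divr_gt0; lra.
have th12 : th <= 1 / 2 by rewrite ge_min lexx.
have thc : th * (c + 1) <= c' - c.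
  by rewrite -ler_pdivlMr; [rewrite ge_min lexx orbT|lra].
pose k := rho / 2 * th.
have k0 : 0 < k by rewrite mulr_gt0 //; lra.
have [t] := @rat_in_itvoo R (x - k) (x + k) ltac:(lra).
rewrite in_itv /= => /andP[t1 t2].
have sE : rd R (pickle (t, s)) = ratr s.
  by rewrite /rd /qq pickleK /= ifT//; lra.
have tE : ctr R (pickle (t, s)) = ratr t by rewrite /ctr /qq pickleK.
have kle : k <= rho / 4 by rewrite /k; nra.
have ck : c * k <= (c' - c) * ratr s.
  have : c * k <= c * (ratr s * th) by rewrite ler_wpM2l// /k; nra.
  move/le_trans; apply; nra.
exists (pickle (t, s)); rewrite sE tE; split.
- by rewrite BBE sE tE; rewrite distrC ltr_distlC; apply/andP; split; lra.
- lra.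
- move=> y; rewrite distrC => ty.
  have yx : `|y - x| <= ratr s + k.
    have -> : y - x = (y - ratr t) + (ratr t - x) by rewrite addrA subrK.
    apply: (le_trans (ler_normD _ _)); apply: lerD => //.
    by rewrite distrC; apply/ltW; rewrite ltr_distlC; apply/andP; split; lra.
  split.
  + by apply: (le_lt_trans yx); lra.
  + by rewrite distrC; apply: (le_lt_trans yx); lra.
  + apply: (le_trans (ler_wpM2l c0 yx)); nra.
- have : rho * (c' *+ 2) <= d by rewrite -ler_pdivlMr ?mulrn_wgt0.
  rewrite -mulr_natr; nra.
Qed.
Local Open Scope ereal_scope.
Lemma H_slice (R : realType) (M : Type) (rho : M -> M -> R)
  (hrho : is_metric rho) (a b : R) (f : R -> M) (A : set R) (c c' d eta : R) :
  (0 < d)%R -> (0 <= c)%R -> (c < c')%R -> (0 < eta)%R -> A `<=` `[a, b] ->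
  (forall x, A x -> exists2 r : R, (0 < r)%R & forall y, (a <= y <= b)%R ->
     (`|y - x| < r)%R -> (rho (f y) (f x) <= c * `|y - x|)%R) ->
  hausdorff1_delta rho d (f @` A) <=
    c'%:E * ((wlength (@idfun R))^* A)%mu + eta%:E.
Proof.
move=> d0 c0 cc' eta0 Aab HA.
have c'0 : (0 < c')%R by apply: le_lt_trans cc'.
have [U [oO AO Ole]] := outer_measure_open_le A (divr_gt0 eta0 c'0).
pose V := [set n | closure (BB R n) `<=` U /\ (c' * (rd R n *+ 2) <= d)%R /\
   diam rho (f @` (A `&` closure (BB R n))) <= (c' * (rd R n *+ 2))%:E].
have cov : vitali_cover A (BB R) V.
  split; first by move=> i; exact: is_ball_ball.
  move=> x Ax e e0.
  have [rx rx0 Hx] := HA x Ax.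
  have := oO x (AO x Ax); move/nbhs_ballP => [eO eO0 hO].
  have [n [Bx rde Hy cd]] := @good_ball R x e rx eO c c' d e0 rx0 eO0 c0 cc' d0.
  exists n; split => //; last by rewrite radius_BB.
  split; [|split=>//].
  - by move=> y; rewrite closure_BBE => /Hy [_ xy _]; apply: hO.
  - rewrite mulrnAr; apply: (@diam_ballish _ _ _ hrho _ (f x)).
      by rewrite mulr_ge0 ?ltW ?rd_gt0.
    move=> _ [y [Ay cy] <-]; move: cy; rewrite closure_BBE => /Hy [yx _ cyx].
    apply: le_trans cyx; apply: Hx => //.
    by have := Aab _ Ay; rewrite /= in_itv.
have B0 : forall i, (0 < (radius (BB R i))%:num)%R by move=> i; rewrite radius_BB rd_gt0.
have [D [cD DV tD ZD]] := vitali_theorem B0 cov.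
pose Z := A `\` \bigcup_(k in D) closure (BB R k).
pose S n := if n \in D then f @` (A `&` closure (BB R n)) else set0.
have sub : f @` A `<=` (\bigcup_n S n) `|` f @` Z.
  move=> _ [x Ax <-].
  have [[k Dk cx]|nx] := pselect ((\bigcup_(k in D) closure (BB R k)) x).
    by left; exists k => //; rewrite /S ifT ?inE//; exists x.
  by right; exists x.
apply: le_trans (@H_mono _ _ rho d _ _ sub) _.
apply: le_trans (@H_U2 _ _ rho d _ _ (ltW d0)) _.
have HZ : hausdorff1_delta rho d (f @` Z) <= 0.
  apply: (@H_null _ _ rho a b f Z c d) => //.
  - by move=> x [Ax _]; exact: Aab.
  - by move=> x [Ax _]; exact: HA.
apply: le_trans (leeD (lexx _) HZ) _; rewrite adde0.
have Sd n : diam rho (S n) <= (c'%:E * (if n \in D then lebesgue_measure (closure (BB R n)) else 0)).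
  rewrite /S; case: ifPn => [/set_mem Dn|_]; last by rewrite diam_set0 mule0.
  have [_ [_ Hd]] := DV n Dn.
  have mE : lebesgue_measure (closure (BB R n)) = (rd R n *+ 2)%:E.
    by rewrite /BB closure_ballE lebesgue_measure_closed_ball ?ltW ?rd_gt0.
  by rewrite mE -EFinM.
have Sdd n : diam rho (S n) <= d%:E.
  rewrite /S; case: ifPn => [/set_mem Dn|_]; last by rewrite diam_set0 lee_fin ltW.
  have [_ [cd Hd]] := DV n Dn.
  by apply: le_trans Hd _; rewrite lee_fin.
apply: le_trans (@H_cover _ _ rho d _ S (fun x => id) Sdd) _.
have : \sum_(0 <= n <oo) diam rho (S n) <= \sum_(0 <= n <oo)
   (c'%:E * (if n \in D then lebesgue_measure (closure (BB R n)) else 0)).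
  by apply: lee_nneseries => [*|n _]; [exact: diam_ge0|exact: Sd].
move/le_trans; apply.
rewrite nneseriesZl; last by move=> n _; case: ifPn => // _; exact: measure_ge0.
rewrite -eseries_mkcond -measure_bigcup//; last first.
  by move=> i _; rewrite /BB closure_ballE; exact: measurable_closed_ball.
have lU : lebesgue_measure (\bigcup_(k in D) closure (BB R k)) <= lebesgue_measure U.
  apply: (le_outer_measure ((wlength (@idfun R))^*)%mu).
  by apply: bigcup_sub => k Dk; have [] := DV k Dk.
apply: le_trans (lee_wpmul2l _ (le_trans lU Ole)) _; first by rewrite lee_fin ltW.
rewrite ge0_muleDr; last 2 first.
- exact: outer_measure_ge0.
- by rewrite lee_fin divr_ge0// ltW.
by rewrite -EFinM mulrC divfK ?gt_eqF.
Qed.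
Local Open Scope ring_scope.
Lemma md_ge0 (R : realType) (M : Type) (rho : M -> M -> R)
  (hrho : is_metric rho) (a b x L : R) (f : R -> M) :
  a < b -> a <= x <= b -> has_metric_derivative rho f a b x L -> 0 <= L.
Proof.
move=> ab xab H; rewrite leNgt; apply/negP => L0.
have [r r0 Hr] := H (- L) ltac:(lra).
have [t [t0 tab tr]] : exists t, [/\ t != 0, a <= x + t <= b & `|t| < r].
  have [xb|xb] := ltP x b.
    exists (Num.min (r / 2) (b - x)).
    have h0 : 0 < Num.min (r / 2) (b - x) by rewrite lt_min; apply/andP; split; lra.
    have h1 : Num.min (r / 2) (b - x) <= r / 2 by rewrite ge_min lexx.
    have h2 : Num.min (r / 2) (b - x) <= b - x by rewrite ge_min lexx orbT.
    split; first by rewrite gt_eqF.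
      by apply/andP; split; lra.
    by rewrite gtr0_norm//; lra.
  exists (- Num.min (r / 2) (b - a)).
  have h0 : 0 < Num.min (r / 2) (b - a) by rewrite lt_min; apply/andP; split; lra.
  have h1 : Num.min (r / 2) (b - a) <= r / 2 by rewrite ge_min lexx.
  have h2 : Num.min (r / 2) (b - a) <= b - a by rewrite ge_min lexx orbT.
  split; first by rewrite oppr_eq0 gt_eqF.
    by apply/andP; split; lra.
  by rewrite normrN gtr0_norm//; lra.
have := Hr t t0 tab tr; rewrite ltr_norml => /andP[_].
have : 0 <= rho (f (x + t)) (f x) / `|t|.
  by rewrite divr_ge0//; case: hrho.
lra.
Qed.

Lemma md_lip (R : realType) (M : Type) (rho : M -> M -> R)
  (hrho : is_metric rho) (a b x L eps : R) (f : R -> M) :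
  0 < eps -> has_metric_derivative rho f a b x L ->
  exists2 r : R, 0 < r & forall y, a <= y <= b -> `|y - x| < r ->
     rho (f y) (f x) <= (L + eps) * `|y - x|.
Proof.
move=> e0 H; have [r r0 Hr] := H eps e0; exists r => // y yab yx.
have [->|yx0] := eqVneq y x.
  have [_ [h _]] := hrho; rewrite (proj2 (h (f x) (f x)))// subrr normr0 mulr0//.
have t0 : y - x != 0 by rewrite subr_eq0.
have := Hr (y - x) t0; rewrite addrC subrK => /(_ yab yx).
rewrite ltr_norml => /andP[_].
have nt : 0 < `|y - x| by rewrite normr_gt0.
by rewrite ltrBlDl ltr_pdivrMr// => /ltW; rewrite mulrC addrC.
Qed.
Local Open Scope ereal_scope.
Theorem theorem2p4 (R : realType) (M : Type) (rho : M -> M -> R)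
  (hrho : is_metric rho) (a b : R) (f : R -> M) (E : set (lebType R))
  (md : R -> R)
  (hEab : E `<=` `[a, b])
  (hEmeas : measurable E)
  (hmd : forall x, E x -> has_metric_derivative rho f a b x (md x))
  (hmdmeas : measurable_fun E md) :
  (hausdorff1 rho (f @` E) <=
     \int[@completed_lebesgue_measure R]_(x in E) (md x)%:E)%E.
Proof.
apply: ge_ereal_sup => _ [d /= d0 <-].
have mdm : measurable_fun E (fun x => (md x)%:E) by exact/measurable_EFinP.
have [ab|ba] := ltP a b; last first.
  have E0 : @completed_lebesgue_measure R E = 0.
    apply/eqP; rewrite eq_le measure_ge0 andbT.
    have : lebesgue_measure (`[a, b] : set R) = 0.
      by rewrite lebesgue_measure_itv /= lte_fin ltNge ba.
    move=> <-; exact: (le_outer_measure ((wlength (@idfun R))^*)%mu).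
  rewrite null_set_integral//.
  apply: (@H_null _ _ rho a b f E 0%R d) => //.
  move=> x Ex; exists 1%R => // y yab _.
  have := hEab _ Ex; rewrite /= in_itv /= => xab.
  have -> : y = x by apply/eqP; rewrite eq_le; apply/andP; split; lra.
  by have [_ [h _]] := hrho; rewrite (proj2 (h (f x) (f x)))// mul0r.
have Eab x : E x -> (a <= x <= b)%R by move=> Ex; have := hEab _ Ex; rewrite /= in_itv.
have mdge0 x : E x -> (0 <= md x)%R.
  by move=> Ex; exact: (@md_ge0 _ _ rho hrho a b x (md x) f ab (Eab x Ex) (hmd x Ex)).
apply/lee_addgt0Pr => e e0.
have den0 : (0 < 3 * (b - a) + 1)%R by lra.
pose eps := (e / (3 * (b - a) + 1))%R.
have eps0 : (0 < eps)%R by rewrite divr_gt0.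
pose Ej j := E `&` md @^-1` `[(j%:R * eps)%R, (j.+1%:R * eps)%R[.
have mEj j : measurable (Ej j) by apply: hmdmeas => //; exact: measurable_itv.
have EjE x j : Ej j x -> Num.truncn (md x / eps) = j.
  move=> [_ /=]; rewrite in_itv /= => /andP[h1 h2].
  by apply: truncn_def; rewrite ler_pdivlMr// ltr_pdivrMr// h1 h2.
have EU : E = \bigcup_j Ej j.
  apply/seteqP; split => [x Ex|x [j _ [Ex _]]//].
  exists (Num.truncn (md x / eps)) => //; split => //=; rewrite in_itv /=.
  have := truncn_itv (divr_ge0 (mdge0 x Ex) (ltW eps0)).
  by rewrite ler_pdivlMr// ltr_pdivrMr.
have tE : trivIset setT Ej.
  apply/trivIsetP => i j _ _ ij; apply/seteqP; split => // x [/EjE h1 /EjE h2].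
  by move/eqP: ij; rewrite -h1 -h2.
have Hsl j : hausdorff1_delta rho d (f @` Ej j) <=
    (j.+3%:R * eps)%:E * @completed_lebesgue_measure R (Ej j) +
    (eps / (2 ^ j.+1)%:R)%:E.
  apply: (@H_slice _ _ rho hrho a b f (Ej j) (j.+2%:R * eps)%R) => //.
  - by rewrite mulr_ge0// ltW.
  - by rewrite ltr_pM2r// ltr_nat.
  - by rewrite divr_gt0// ltr0n expn_gt0.
  - by move=> x [Ex _]; exact: Eab.
  - move=> x [Ex /=]; rewrite in_itv /= => /andP[_ h2].
    have [r r0 Hr] := @md_lip _ _ rho hrho a b x (md x) eps f eps0 (hmd x Ex).
    exists r => // y yab yx; apply: (le_trans (Hr y yab yx)).
    have e2 : (j.+2%:R * eps = j.+1%:R * eps + eps :> R)%R.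
      by rewrite -[in LHS](natr1 j.+1) mulrDl mul1r.
    rewrite ler_wpM2r //; lra.
have fEU : f @` E = \bigcup_j f @` Ej j by rewrite {1}EU image_bigcup.
have IE : \int[@completed_lebesgue_measure R]_(x in E) (md x)%:E =
    \sum_(0 <= j <oo) \int[@completed_lebesgue_measure R]_(x in Ej j) (md x)%:E.
  rewrite {1}EU; apply: ge0_integral_bigcup => //.
  - by rewrite -EU.
  - by rewrite -EU => x Ex; rewrite lee_fin mdge0.
pose mu := @completed_lebesgue_measure R.
have term j : (j.+3%:R * eps)%:E * mu (Ej j) <=
    \int[mu]_(x in Ej j) (md x)%:E + (3 * eps)%:E * mu (Ej j).
  have -> : (j.+3%:R * eps = j%:R * eps + 3 * eps :> R)%R.
    by rewrite -addn3 natrD mulrDl.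
  have e0' : (0 <= eps)%R by exact: ltW.
  rewrite EFinD ge0_muleDl; last 2 first.
  - by rewrite lee_fin mulr_ge0.
  - by rewrite lee_fin mulr_ge0.
  apply: leeD2r.
  rewrite -integral_cst//; apply: ge0_le_integral => //.
  - by move=> x _; rewrite /= lee_fin mulr_ge0.
  - by apply: measurable_funS mdm => // x [].
  - by move=> x [_ /=]; rewrite in_itv /= => /andP[h1 _]; rewrite lee_fin.
have muE : mu E <= (b - a)%:E.
  have : lebesgue_measure (`[a, b] : set R) = (b - a)%:E.
    by rewrite lebesgue_measure_itv /= lte_fin ab -EFinD.
  move=> <-; exact: (le_outer_measure ((wlength (@idfun R))^*)%mu).
have sumE : \sum_(0 <= j <oo) mu (Ej j) = mu E.
  rewrite /mu [in RHS]EU measure_bigcup//.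
  rewrite nneseries_esumT// nneseries_esum// set_mem_set//.
rewrite fEU IE.
apply: le_trans (@H_sub _ _ rho d (fun j => f @` Ej j)) _.
have step1 : \sum_(0 <= j <oo) hausdorff1_delta rho d (f @` Ej j) <=
    \sum_(0 <= j <oo) ((j.+3%:R * eps)%:E * mu (Ej j) + (eps / (2 ^ j.+1)%:R)%:E).
  by apply: lee_nneseries => [*|j _]; [exact: H_ge0|exact: Hsl].
apply: (le_trans step1).
apply: le_trans (@epsilon_trick _ (fun j => (j.+3%:R * eps)%:E * mu (Ej j)) eps xpredT _ _) _.
- by move=> n; rewrite mule_ge0// lee_fin mulr_ge0// ltW.
- exact: ltW.
have step2 : \sum_(0 <= j <oo) (j.+3%:R * eps)%:E * mu (Ej j) <=
    \sum_(0 <= j <oo) (\int[mu]_(x in Ej j) (md x)%:E + (3 * eps)%:E * mu (Ej j)).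
  by apply: lee_nneseries => [n _ _|j _]; [rewrite mule_ge0// lee_fin mulr_ge0// ltW|exact: term].
apply: le_trans (leeD step2 (lexx _)) _.
rewrite nneseriesD; last 2 first.
- by move=> n _ _; apply: integral_ge0 => x [Ex _]; rewrite lee_fin mdge0.
- by move=> n _ _; rewrite mule_ge0// lee_fin mulr_ge0// ltW.
rewrite nneseriesZl// sumE -addeA; apply: leeD2l.
apply: le_trans (leeD (lee_wpmul2l _ muE) (lexx _)) _.
  by rewrite lee_fin mulr_ge0// ltW.
rewrite -EFinM -EFinD lee_fin.
have : (eps * (3 * (b - a) + 1) = e)%R by rewrite /eps divfK ?gt_eqF.
lra.
Qed.
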